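(* Let $(X,d)$ be a complete ultrametric space. If $f:X\to X$ is an eventually $1$-Lipschitz map, then $f$ has the shadowing property.
   Context: An ultrametric space satisfies $d(x,z)\le\max\{d(x,y),d(y,z)\}$ for all $x,y,z$. A map $f:X\to X$ is eventually Lipschitz $L$ if there is $\varepsilon>0$ such that $d(f(x),f(y))\le L\,d(x,y)$ whenever $d(x,y)<\varepsilon$. Shadowing property: for every $\varepsilon>0$ there is $\delta>0$ such that every sequence $(x_n)_{n\in\mathbb{N}}$ with $d(f(x_n),x_{n+1})<\delta$ for all $n$ admits $x\in X$ with $d(f^n(x),x_n)<\varepsilon$ for all $n\in\mathbb{N}$. *)

(* Defs.v *)
From Stdlib Require Import Reals.
Open Scope R_scope.

Definition is_metric {X : Type} (d : X -> X -> R) : Prop :=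
  (forall x y, 0 <= d x y) /\
  (forall x y, d x y = 0 <-> x = y) /\
  (forall x y, d x y = d y x) /\
  (forall x y z, d x z <= d x y + d y z).

Definition is_ultrametric {X : Type} (d : X -> X -> R) : Prop :=
  is_metric d /\ forall x y z, d x z <= Rmax (d x y) (d y z).

Definition cauchy_seq {X : Type} (d : X -> X -> R) (u : nat -> X) : Prop :=
  forall eps, 0 < eps -> exists N, forall m n, (N <= m)%nat -> (N <= n)%nat ->
    d (u m) (u n) < eps.

Definition converges_to {X : Type} (d : X -> X -> R) (u : nat -> X) (l : X) : Prop :=
  forall eps, 0 < eps -> exists N, forall n, (N <= n)%nat -> d (u n) l < eps.

Definition complete {X : Type} (d : X -> X -> R) : Prop :=
  forall u : nat -> X, cauchy_seq d u -> exists l, converges_to d u l.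

Definition eventually_lipschitz {X : Type} (d : X -> X -> R) (f : X -> X) (L : R) : Prop :=
  exists eps, 0 < eps /\
    forall x y, d x y < eps -> d (f x) (f y) <= L * d x y.

Definition shadowing {X : Type} (d : X -> X -> R) (f : X -> X) : Prop :=
  forall eps, 0 < eps -> exists delta, 0 < delta /\
    forall xs : nat -> X,
      (forall n, d (f (xs n)) (xs (S n)) < delta) ->
      exists x, forall n, d (Nat.iter n f x) (xs n) < eps.

(* Main.v *)
Require Import Defs.
From Stdlib Require Import Reals Lra.
Open Scope R_scope.

Theorem corollary5p3 (X : Type) (d : X -> X -> R) (f : X -> X) :
  is_ultrametric d -> complete d -> eventually_lipschitz d f 1 ->
  shadowing d f.
Proof.
  intros [[Hpos [Hzero [Hsym Htri]]] Hult] _ [r [Hr Hlip]] eps Heps.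
  exists (Rmin eps r). split.
  { apply Rmin_glb_lt; assumption. }
  intros xs Hxs. exists (xs 0%nat).
  assert (H : forall n, d (Nat.iter n f (xs 0%nat)) (xs n) < Rmin eps r).
  { induction n as [|n IH].
    - simpl. replace (d (xs 0%nat) (xs 0%nat)) with 0.
      + apply Rmin_glb_lt; assumption.
      + symmetry. apply Hzero. reflexivity.
    - change (Nat.iter (S n) f (xs 0%nat)) with (f (Nat.iter n f (xs 0%nat))).
      eapply Rle_lt_trans. apply (Hult _ (f (xs n)) _).
      assert (Hl : d (f (Nat.iter n f (xs 0%nat))) (f (xs n)) <= 1 * d (Nat.iter n f (xs 0%nat)) (xs n)).
      { apply Hlip. eapply Rlt_le_trans. exact IH. apply Rmin_r. }
      specialize (Hxs n).
      apply Rmax_lub_lt; lra. }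
  intros n. eapply Rlt_le_trans. apply H. apply Rmin_l.
Qed.
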